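(* Assume $X\in\mathbb{R}^p$, $C\ge 0$, $T\ge 0$, and let $P_{(X,C)}$ be any given distribution of $(X,C)$. Let $\hat L(\cdot)$ be a lower prediction bound built from observed data $(X_i,C_i,\widetilde T_i)_{i=1}^n$, $\widetilde T_i=\min(T_i,C_i)$, where $(X_i,C_i,T_i)$ are i.i.d. copies of $(X,C,T)$. If $\hat L$ satisfies \[\mathbb{P}\big(T\ge \hat L(X)\mid X=x\big)\ge 1-\alpha\] uniformly for all joint distributions of $(X,C,T)$ with $(X,C)\sim P_{(X,C)}$, then for all such distributions, \[\mathbb{P}(\hat L(x)=0)\ge 1-\alpha\] at almost all points $x$ (with respect to $P_X$) aside from the atoms of $P_X$.
   Context: In the conditional coverage criterion, the probability is over the data used to build $\hat L$ and over a new unit $(X,C,T)$, independent of the data, conditional on $X=x$. $P_X$ denotes the marginal distribution of $X$ under $P_{(X,C)}$. *)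

(* Defs.v *)
From HB Require Import structures.
From mathcomp Require Import all_boot all_order all_algebra.
From mathcomp Require Import all_classical all_reals all_analysis.
From mathcomp Require Import measurable_realfun.
Set Implicit Arguments. Unset Strict Implicit. Unset Printing Implicit Defensive.
Import Order.TTheory GRing.Theory Num.Theory.
Local Open Scope classical_set_scope.
Local Open Scope ring_scope.

Section survival_defs.
Context (R : realType) (p : nat).

(* the covariate space R^p, with its Borel (= product) sigma-algebra *)
Local Notation Xsp := (p.-tuple R).
(* a unit (X, C, T): ((X, C), T) *)
Local Notation Unit := ((p.-tuple R * R) * R)%type.

Definition observe (z : Unit) : Unit := (z.1.1, z.1.2, Num.min z.2 z.1.2).

Definition obs_data d (Omega : measurableType d) (n : nat)
  (Z : option 'I_n -> Omega -> Unit) (w : Omega) : n.-tuple Unit :=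
  [tuple observe (Z (Some i) w) | i < n].

Definition marginal_X (PXC : set (p.-tuple R * R)%type -> \bar R) : set Xsp -> \bar R :=
  pushforward PXC fst.

Definition iid_family (I : finType) (i0 : I) d (Omega : measurableType d)
  (P : probability Omega R) (Z : I -> Omega -> Unit) : Prop :=
  [/\ (forall i, measurable_fun setT (Z i)),
      (forall i (A : set Unit), measurable A -> P (Z i @^-1` A) = P (Z i0 @^-1` A))
    & (forall B : I -> set Unit, (forall i, measurable (B i)) ->
        P (\bigcap_(i in [set: I]) (Z i @^-1` B i)) =
        (\big[*%E/1%E]_(i : I) P (Z i @^-1` B i))%E)].

(* The model: Z None = (X, C, T) is the new unit, Z (Some i), i < n, are the
   data units; all are i.i.d. copies of (X, C, T), where (X, C) ~ P_(X,C)
   and T >= 0 almost surely (the law of T given (X,C) is arbitrary). *)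
Definition survival_model (PXC : probability (p.-tuple R * R)%type R) (n : nat)
  d (Omega : measurableType d) (P : probability Omega R)
  (Z : option 'I_n -> Omega -> Unit) : Prop :=
  [/\ iid_family None P Z,
      (forall A : set (p.-tuple R * R)%type, measurable A ->
         P ((fun w => (Z None w).1) @^-1` A) = PXC A)
    & P [set w | (Z None w).2 < 0] = 0%E].

Definition cond_prob_version d (Omega : measurableType d) (P : probability Omega R)
  (E : set Omega) (Y : Omega -> Xsp) (mu : set Xsp -> \bar R) (g : Xsp -> \bar R) :=
  measurable_fun setT g /\
  forall A : set Xsp, measurable A -> P (E `&` Y @^-1` A) = (\int[mu]_(y in A) g y)%E.

Definition coverage_event (n : nat) d (Omega : measurableType d)
  (Z : option 'I_n -> Omega -> Unit) (Lhat : n.-tuple Unit -> Xsp -> R) : set Omega :=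
  [set w | Lhat (obs_data Z w) (Z None w).1.1 <= (Z None w).2].

Definition cond_coverage (PXC : probability (p.-tuple R * R)%type R) (n : nat)
  (Lhat : n.-tuple Unit -> Xsp -> R) (alpha : R)
  d (Omega : measurableType d) (P : probability Omega R)
  (Z : option 'I_n -> Omega -> Unit) : Prop :=
  exists g : Xsp -> \bar R,
    cond_prob_version P (coverage_event Z Lhat) (fun w => (Z None w).1.1)
      (marginal_X PXC) g /\
    {ae marginal_X PXC, forall x, ((1 - alpha)%R%:E <= g x)%E}.

End survival_defs.

Notation Xsp R p := (p.-tuple R).
Notation Unit R p := ((p.-tuple R * R) * R)%type.

(* Main.v *)
Require Import Defs.
From HB Require Import structures.
From mathcomp Require Import all_boot all_order all_algebra.
From mathcomp Require Import all_classical all_reals all_analysis.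
From mathcomp Require Import measurable_realfun.
From mathcomp Require Import lra.
Import Order.TTheory GRing.Theory Num.Theory.
Import numFieldNormedType.Exports.
Local Open Scope classical_set_scope.
Local Open Scope ring_scope.
Set Implicit Arguments. Unset Strict Implicit. Unset Printing Implicit Defensive.
Section marg.
Context (R : realType) (p : nat) (PXC : probability (p.-tuple R * R)%type R).
Local Open Scope ereal_scope.
Let mfst : measurable_fun [set: (p.-tuple R * R)%type] fst := measurable_fst.
Let m0 : marginal_X PXC set0 = 0.
Proof. by rewrite /marginal_X /pushforward preimage_set0 measure0. Qed.
Let mge0 A : 0 <= marginal_X PXC A.
Proof. exact: measure_ge0. Qed.
Let msa : semi_sigma_additive (marginal_X PXC).
Proof.
move=> F mF tF mUF; rewrite /marginal_X /pushforward preimage_bigcup.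
apply: measure_semi_sigma_additive.
- by move=> k; rewrite -[X in measurable X]setTI; exact: mfst.
- apply/trivIsetP => /= i j _ _ ij; rewrite -preimage_setI.
  by move/trivIsetP : tF => /(_ _ _ _ _ ij) ->//; rewrite preimage_set0.
- by rewrite -preimage_bigcup -[X in measurable X]setTI; exact: mfst.
Qed.
HB.instance Definition _ := isMeasure.Build _ _ _ (marginal_X PXC) m0 mge0 msa.
Let mT : marginal_X PXC setT = 1.
Proof. by rewrite /marginal_X /pushforward preimage_setT probability_setT. Qed.
HB.instance Definition _ := Measure_isProbability.Build _ _ _ (marginal_X PXC) mT.
End marg.

Section meas.
Context (R : realType) (p : nat).

Definition modT (Q : set (p.-tuple R)) (z : Unit R p) : Unit R p :=
  (z.1, \1_(~` Q) z.1.1 * z.2).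

Lemma measurable_modT Q : measurable Q -> measurable_fun setT (modT Q).
Proof.
move=> mQ; apply: measurable_fun_pair => //.
apply: (measurable_funM (f := fun z : Unit R p => \1_(~` Q) z.1.1)
  (g := fun z : Unit R p => z.2)) => //.
apply: (measurableT_comp (f := (\1_(~` Q) : p.-tuple R -> R)) (g := fun z : Unit R p => z.1.1)).
  by apply: measurable_indic; exact: measurableC.
exact: (measurableT_comp (f := fst) (g := fst)).
exact: measurable_snd.
Qed.

Lemma measurable_observe : measurable_fun setT (@observe R p).
Proof.
apply: measurable_fun_pair; first apply: measurable_fun_pair.
- exact: (measurableT_comp (f := fst) (g := fst)).
- exact: (measurableT_comp (f := snd) (g := fst)).
- apply: (measurable_minr (f := snd) (g := fun z : Unit R p => z.1.2)) => //.
  exact: (measurableT_comp (f := snd) (g := fst)).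
Qed.

Lemma measurable_obs_data n d (Omega : measurableType d)
  (Z : option 'I_n -> Omega -> Unit R p) :
  (forall i, measurable_fun setT (Z (Some i))) ->
  measurable_fun setT (obs_data Z).
Proof.
move=> mZ; apply/measurable_fun_tnthP => i.
have -> : ((@tnth n (Unit R p))^~ i \o obs_data Z) = @observe R p \o Z (Some i).
  by apply/funext => w /=; rewrite /obs_data tnth_mktuple.
exact: measurableT_comp (@measurable_observe) (mZ i).
Qed.

End meas.
Lemma big_optionE (R : Type) (idx : R) (op : Monoid.law idx) (T : finType) (F : option T -> R) :
  \big[op/idx]_(i : option T) F i = op (F None) (\big[op/idx]_(i : T) F (Some i)).
Proof.
have -> : index_enum (option T) = None :: map Some (index_enum T).
  rewrite /index_enum !unlock /= /option_enum; congr (_ :: map _ _).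
  by rewrite unlock.
by rewrite big_cons big_map.
Qed.
Section lhat.
Context (R : realType) (p n : nat) (Lhat : n.-tuple (Unit R p) -> p.-tuple R -> R).
Hypothesis mL : measurable_fun setT (fun u : n.-tuple (Unit R p) * p.-tuple R => Lhat u.1 u.2).

Lemma measurable_Lzero d' (T : measurableType d') (D : T -> n.-tuple (Unit R p)) :
  measurable_fun setT D ->
  measurable [set wx : T * p.-tuple R | Lhat (D wx.1) wx.2 = 0].
Proof.
move=> mD.
have mf : measurable_fun setT (fun wx : T * p.-tuple R => Lhat (D wx.1) wx.2).
  apply: (measurableT_comp (f := fun u : n.-tuple (Unit R p) * p.-tuple R => Lhat u.1 u.2)
    (g := fun wx : T * p.-tuple R => (D wx.1, wx.2))) => //.
  apply: measurable_fun_pair => //.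
  exact: measurableT_comp mD measurable_fst.
rewrite -[X in measurable X]setTI.
exact: mf measurableT _ (measurable_set1 0).
Qed.

Lemma measurable_Lzero_x d' (T : measurableType d') (D : T -> n.-tuple (Unit R p)) x :
  measurable_fun setT D -> measurable [set w | Lhat (D w) x = 0].
Proof.
move=> mD.
have mf : measurable_fun setT (fun w : T => Lhat (D w) x).
  apply: (measurableT_comp (f := fun u : n.-tuple (Unit R p) * p.-tuple R => Lhat u.1 u.2)
    (g := fun w : T => (D w, x))) => //.
  exact: measurable_fun_pair.
rewrite -[X in measurable X]setTI.
exact: mf measurableT _ (measurable_set1 0).
Qed.

Lemma measurable_Hfun d' (T : measurableType d') (Pr : probability T R)
  (D : T -> n.-tuple (Unit R p)) :
  measurable_fun setT D ->
  measurable_fun setT (fun x => Pr [set w | Lhat (D w) x = 0]).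
Proof.
move=> mD.
have := measurable_fun_ysection Pr (measurable_Lzero mD).
congr measurable_fun; apply/funext => x /=; congr (Pr _).
by apply/seteqP; split => w /=; rewrite /ysection /= inE.
Qed.

End lhat.
Lemma arith (R : realFieldType) (a g cC b ik e nn : R) :
  a - ik < g + cC * nn -> ik < e / 2 -> b * nn + b < e / 2 ->
  cC * nn <= b * nn -> 0 <= b -> a <= g + e.
Proof. move=> *; lra. Qed.

Section cubes.
Context (R : realType) (p : nat).

Definition cube (k : nat) (j : p.-tuple int) : set (p.-tuple R) :=
  [set y | forall i, (tnth j i)%:~R <= tnth y i * k.+1%:R < (tnth j i + 1)%:~R].

Definition jx (k : nat) (x : p.-tuple R) : p.-tuple int :=
  [tuple Num.floor (tnth x i * k.+1%:R) | i < p].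

Definition ballk (k : nat) (x : p.-tuple R) : set (p.-tuple R) :=
  [set y | forall i, tnth x i - k.+1%:R^-1 < tnth y i < tnth x i + k.+1%:R^-1].

Lemma measurable_tuple_pred (S : 'I_p -> set R) : (forall i, measurable (S i)) ->
  measurable [set y : p.-tuple R | forall i, S i (tnth y i)].
Proof.
move=> mS.
have -> : [set y : p.-tuple R | forall i, S i (tnth y i)] =
    \bigcap_(i in [set: 'I_p]) ((fun y : p.-tuple R => tnth y i) @^-1` S i).
  by apply/seteqP; split => y /= h i; [move=> _; exact: h|exact: h].
apply: fin_bigcap_measurable; first exact: finite_finset.
move=> i _; rewrite -[X in measurable X]setTI.
exact: measurable_tnth measurableT _ (mS i).
Qed.

Lemma measurable_cube k j : measurable (cube k j).
Proof.
apply: (measurable_tuple_pred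
  (S := fun i => [set t : R | (tnth j i)%:~R <= t * k.+1%:R < (tnth j i + 1)%:~R])).
move=> i.
have -> : [set t : R | (tnth j i)%:~R <= t * k.+1%:R < (tnth j i + 1)%:~R] =
   setT `&` ((fun t : R => t * k.+1%:R) @^-1` [set` `[(tnth j i)%:~R, (tnth j i + 1)%:~R[]).
  by apply/seteqP; split => t /=; rewrite in_itv /=; [move=> h; split|case].
by apply: measurable_funM.
Qed.

Lemma measurable_ballk k x : measurable (ballk k x).
Proof.
apply: (measurable_tuple_pred
  (S := fun i => [set t : R | tnth x i - k.+1%:R^-1 < t < tnth x i + k.+1%:R^-1])).
move=> i.
have -> : [set t : R | tnth x i - k.+1%:R^-1 < t < tnth x i + k.+1%:R^-1] =
   [set` `](tnth x i - k.+1%:R^-1), (tnth x i + k.+1%:R^-1)[].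
  by apply/seteqP; split => t /=; rewrite in_itv.
exact: measurable_itv.
Qed.

Lemma cube_jx k x : cube k (jx k x) x.
Proof. by move=> i; rewrite tnth_mktuple; exact: floor_itv. Qed.

Lemma cube_ballk k x : cube k (jx k x) `<=` ballk k x.
Proof.
move=> y hy i; have := hy i; have := cube_jx k x i.
set j := tnth (jx k x) i; set c : R := k.+1%:R.
have c0 : 0 < c by rewrite ltr0n.
have cc : c * c^-1 = 1 by rewrite divff // gt_eqF.
have ci0 : 0 < c^-1 by rewrite invr_gt0.
rewrite intrD /= => /andP[h1 h2] /andP[h3 h4].
move: h2 h4; rewrite (_ : (1%:~R : R) = 1) // => h2 h4.
have e1 : (tnth y i - tnth x i) * c < 1 by rewrite mulrBl; lra.
have e2 : (tnth x i - tnth y i) * c < 1 by rewrite mulrBl; lra.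
have f1 : tnth y i - tnth x i < c^-1 by rewrite -(ltr_pM2r c0) mulVf ?gt_eqF.
have f2 : tnth x i - tnth y i < c^-1 by rewrite -(ltr_pM2r c0) mulVf ?gt_eqF.
clearbody c j; apply/andP; split; lra.
Qed.

Lemma ballk_nonincr x : nonincreasing_seq (ballk ^~ x).
Proof.
move=> m k mk; apply/subsetPset => y hy i /=.
have := hy i; have : (k.+1%:R^-1 <= m.+1%:R^-1 :> R).
  by rewrite lef_pV2 ?posrE ?ltr0n // ler_nat ltnS.
move: (k.+1%:R^-1 : R) (m.+1%:R^-1 : R) => a b h /andP[h1 h2]; apply/andP; split; lra.
Qed.

Lemma bigcap_ballk x : \bigcap_k ballk k x = [set x].
Proof.
apply/seteqP; split => y /=; last first.
  move=> -> k _ i; have : (0 < k.+1%:R^-1 :> R) by rewrite invr_gt0 ltr0n.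
  move: (k.+1%:R^-1 : R) => a h; apply/andP; split; lra.
move=> hy; apply: eq_from_tnth => i.
apply/eqP; rewrite eq_le; apply/andP; split.
- rewrite leNgt; apply/negP => hlt.
  have d0 : 0 < tnth y i - tnth x i by rewrite subr_gt0.
  have [N _ /(_ N (leqnn _)) hN] := near_infty_natSinv_lt (PosNum d0).
  have := hy N I i; move: hN => /=; move: (N.+1%:R^-1 : R) => a h1 /andP[_ h]; lra.
- rewrite leNgt; apply/negP => hlt.
  have d0 : 0 < tnth x i - tnth y i by rewrite subr_gt0.
  have [N _ /(_ N (leqnn _)) hN] := near_infty_natSinv_lt (PosNum d0).
  have := hy N I i; move: hN => /=; move: (N.+1%:R^-1 : R) => a h1 /andP[h _]; lra.
Qed.

End cubes.
Section main.
Context (R : realType) (p n : nat) (alpha : R)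
  (PXC : probability (p.-tuple R * R)%type R)
  (Lhat : n.-tuple (Unit R p) -> p.-tuple R -> R).
Context d (Omega : measurableType d) (P : probability Omega R)
  (Z : option 'I_n -> Omega -> Unit R p).
Hypothesis hm : survival_model PXC P Z.

Definition Zm (Q : set (p.-tuple R)) : option 'I_n -> Omega -> Unit R p :=
  fun o w => modT Q (Z o w).

Definition Zp (Q : set (p.-tuple R)) : option 'I_n -> (Omega * Omega)%type -> Unit R p :=
  fun o w => match o with None => Zm Q None w.1 | Some i => Zm Q (Some i) w.2 end.

Lemma measurable_Zm Q o : measurable Q -> measurable_fun setT (Zm Q o).
Proof.
move=> mQ; have [[mZ _ _] _ _] := hm.
exact: measurableT_comp (measurable_modT mQ) (mZ o).
Qed.

Lemma measurable_preZm Q o A : measurable Q -> measurable A ->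
  measurable (Zm Q o @^-1` A).
Proof.
by move=> mQ mA; rewrite -[X in measurable X]setTI; apply: measurable_Zm.
Qed.

Local Notation PP := (P \x P)%E.

Lemma model_Zp Q : measurable Q -> survival_model PXC PP (Zp Q).
Proof.
move=> mQ; have [[mZ idZ indZ] hXC hT] := hm.
pose PP0 : probability _ R := PP.
change (survival_model PXC PP0 (Zp Q)).
have P1 : P setT = 1%E := probability_setT P.
have PPl (A : set Omega) : measurable A -> PP0 (A `*` setT) = P A.
  move=> mA; apply: eq_trans (product_measure1E P P mA measurableT) _.
  by rewrite [X in (_ * X)%E](_ : _ = 1%E) ?mule1//; exact: probability_setT.
have PPr (A : set Omega) : measurable A -> PP0 (setT `*` A) = P A.
  move=> mA; apply: eq_trans (product_measure1E P P measurableT mA) _.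
  by rewrite [X in (X * _)%E](_ : _ = 1%E) ?mul1e//; exact: probability_setT.
have PPX (A B : set Omega) : measurable A -> measurable B -> PP0 (A `*` B) = (P A * P B)%E.
  by move=> mA mB; apply: eq_trans (product_measure1E P P mA mB) _.
have ZmE o A : Zm Q o @^-1` A = Z o @^-1` (modT Q @^-1` A) by [].
have mmod A : measurable A -> measurable (modT Q @^-1` A).
  by move=> mA; rewrite -[X in measurable X]setTI; apply: measurable_modT.
split; first split.
- case=> [i|] /=.
  + exact: measurableT_comp (measurable_Zm _ mQ) measurable_snd.
  + exact: measurableT_comp (measurable_Zm _ mQ) measurable_fst.
- move=> o A mA.
  have hN : PP0 (Zp Q None @^-1` A) = P (Zm Q None @^-1` A).
    rewrite -PPl; last exact: measurable_preZm.
    by apply: congr1; apply/seteqP; split => -[w1 w2]; rewrite /preimage /setX /=; tauto.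
  rewrite hN; case: o => [i|]; last exact: hN.
  have -> : Zp Q (Some i) @^-1` A = setT `*` (Zm Q (Some i) @^-1` A).
    by apply/seteqP; split => -[w1 w2]; rewrite /preimage /setX /=; tauto.
  rewrite PPr; last exact: measurable_preZm.
  by rewrite !ZmE idZ//; exact: mmod.
- move=> B mB.
  pose B' o := match o with None => setT | Some i => modT Q @^-1` B (Some i) end.
  have mB' o : measurable (B' o) by case: o => [i|] //=; exact: mmod.
  have -> : \bigcap_(i in [set: option 'I_n]) (Zp Q i @^-1` B i) =
      (Zm Q None @^-1` B None) `*` \bigcap_(i in [set: option 'I_n]) (Z i @^-1` B' i).
    apply/seteqP; split => -[w1 w2] /=.
    + move=> h; split; first exact: (h None).
      by case=> [i|] _ //=; exact: (h (Some i)).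
    + by move=> [h1 h2] [i|] _ //=; exact: (h2 (Some i)).
  rewrite PPX; last 2 first.
    exact: measurable_preZm.
    by apply: fin_bigcap_measurable; [exact: finite_finset|move=> i _; rewrite -[X in measurable X]setTI; apply: mZ].
  rewrite indZ// !big_optionE.
  have e1 : P (Z None @^-1` B' None) = 1%E by rewrite preimage_setT; exact: probability_setT.
  have e2 : PP0 (Zp Q None @^-1` B None) = P (Zm Q None @^-1` B None).
    rewrite -PPl; last exact: measurable_preZm.
    by apply: congr1; apply/seteqP; split => -[w1 w2]; rewrite /preimage /setX /=; tauto.
  have e3 i : PP0 (Zp Q (Some i) @^-1` B (Some i)) = P (Z (Some i) @^-1` B' (Some i)).
    rewrite -ZmE -PPr; last exact: measurable_preZm.
    by apply: congr1; apply/seteqP; split => -[w1 w2]; rewrite /preimage /setX /=; tauto.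
  by rewrite e1 e2 (eq_bigr _ (fun i _ => e3 i)) /= mul1e.
- move=> A mA.
  have mX1 : measurable ((fun w => (Z None w).1) @^-1` A).
    rewrite -[X in measurable X]setTI.
    exact: (measurableT_comp measurable_fst (mZ None)) measurableT _ mA.
  rewrite -hXC// -PPl//.
  by apply: congr1; apply/seteqP; split => -[w1 w2]; rewrite /preimage /setX /=; tauto.
- have mlt : measurable [set z : Unit R p | z.2 < 0].
    have -> : [set z : Unit R p | z.2 < 0] = setT `&` (snd @^-1` [set` `]-oo, (0:R)[]).
      by apply/seteqP; split => z /=; rewrite in_itv /=; [move=> h; split|case].
    exact: measurable_snd measurableT _ (measurable_itv _).
  have mA : measurable [set w | (Zp Q None w).2 < 0].
    rewrite -[X in measurable X]setTI.
    exact: (measurableT_comp (measurable_Zm None mQ) measurable_fst) measurableT _ mlt.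
  have mB : measurable (Z None @^-1` [set z : Unit R p | z.2 < 0] `*` [set: Omega]).
    apply: measurableX => //; rewrite -[X in measurable X]setTI; exact: mZ.
  apply: (subset_measure0 mA mB).
    move=> [w1 w2] /=; rewrite /Zm /modT /= => h; split => //.
    rewrite /preimage /=; move: h; rewrite indicE.
    by case: (_ \in _); rewrite ?mul1r ?mul0r ?ltxx.
  have mZT : measurable (Z None @^-1` [set z : Unit R p | z.2 < 0]).
    rewrite -[X in measurable X]setTI; exact: mZ.
  exact: (eq_trans (PPl _ mZT) hT).
Qed.

Hypothesis mL : measurable_fun setT (fun u : n.-tuple (Unit R p) * p.-tuple R => Lhat u.1 u.2).
Hypothesis L0 : forall D x, 0 <= Lhat D x.
Hypothesis halpha : 0 < alpha < 1.
Hypothesis hcov : forall (d' : measure_display) (T : measurableType d') (Pr : probability T R)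
      (Y : option 'I_n -> T -> Unit R p),
      survival_model PXC Pr Y -> cond_coverage PXC Lhat alpha Pr Y.

Local Notation mu := (marginal_X PXC).

Definition Hf (Q : set (p.-tuple R)) (x : p.-tuple R) :=
  P [set w | Lhat (obs_data (Zm Q) w) x = 0].

Lemma measurable_obs_Zm Q : measurable Q -> measurable_fun setT (obs_data (Zm Q)).
Proof. by move=> mQ; apply: measurable_obs_data => i; exact: measurable_Zm. Qed.

Lemma key Q c : measurable Q -> c < 1 - alpha ->
  mu (Q `&` [set x | Hf Q x <= c%:E]%E) = 0%E.
Proof.
move=> mQ cl.
have [[mZ idZ indZ] hXC hT] := hm.
have mH : measurable_fun setT (Hf Q) by apply: measurable_Hfun => //; exact: measurable_obs_Zm.
have mA0 : measurable (Q `&` [set x | Hf Q x <= c%:E]%E).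
  apply: measurableI => //; rewrite -[X in measurable X]setTI.
  by apply: measurable_lee => //; exact: measurable_cst.
have [c0|c0] := ltP c 0.
  rewrite (_ : _ `&` _ = set0) ?measure0//; apply/seteqP; split => x //= [_].
  move=> h; have := le_trans (measure_ge0 P _) h; by rewrite lee_fin leNgt c0.
have [g [[mg eqg] aeg]] := hcov (model_Zp mQ).
have a1 : (0 <= 1 - alpha)%R by rewrite subr_ge0; case/andP: halpha => _ /ltW.
pose A := (Q `&` [set x | Hf Q x <= c%:E]%E) `&` [set x | (0 <= g x)%E].
have mA : measurable A.
  apply: measurableI => //; rewrite -[X in measurable X]setTI.
  by apply: measurable_lee => //; exact: measurable_cst.
pose X1 := fun w : Omega => (Z None w).1.1.
have mX1 : measurable_fun setT X1.
  exact: (measurableT_comp (f := fst) (g := fun w => (Z None w).1)) (measurableT_comp measurable_fst (mZ None)).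
pose S := [set w : Omega * Omega | A (X1 w.1)] `&` [set w | Lhat (obs_data (Zm Q) w.2) (X1 w.1) = 0].
have mS : measurable S.
  apply: measurableI.
    rewrite -[X in measurable X]setTI.
    exact: (measurableT_comp mX1 measurable_fst) measurableT _ mA.
  have mS0 := measurable_Lzero mL (measurable_obs_Zm mQ).
  rewrite -[X in measurable X]setTI.
  have mpair : measurable_fun setT (fun w : Omega * Omega => (w.2, X1 w.1)).
    exact: measurable_fun_pair measurable_snd (measurableT_comp mX1 measurable_fst).
  exact: mpair measurableT _ mS0.
have SE : coverage_event (Zp Q) Lhat `&` (fun w => (Zp Q None w).1.1) @^-1` A = S.
  apply/seteqP; split => -[w1 w2] /=.
  - rewrite /coverage_event /= => -[hle hA']; split => //.
    have hQ : Q (X1 w1) by case: hA' => -[].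
    move: hle; rewrite /Zm /modT /= indicE in_setC (mem_set hQ) /= mul0r => hle.
    by apply/eqP; rewrite eq_le L0 andbT; exact: hle.
  - move=> [hA' h0]; split => //.
    have hQ : Q (X1 w1) by case: hA' => -[].
    rewrite /coverage_event /= /Zm /modT /= indicE in_setC (mem_set hQ) /= mul0r.
    by change (Lhat (obs_data (Zm Q) w2) (X1 w1) <= 0); rewrite h0.
have eqA := eqg A mA; rewrite SE in eqA.
have muAE : mu A = P (X1 @^-1` A).
  rewrite /marginal_X /pushforward -(hXC (fst @^-1` A))//.
  by rewrite -[X in measurable X]setTI; exact: measurable_fst measurableT _ mA.
have le1 : (\int[P]_w1 (P \o xsection S) w1 <= c%:E * mu A)%E.
  apply: (@le_trans _ _ (\int[P]_w1 ((c * \1_(X1 @^-1` A) w1)%:E))%E).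
    apply: ge0_le_integral => //.
    - exact: measurable_fun_xsection.
    - apply/measurable_EFinP; apply: measurable_funM => //.
      apply: measurable_indic; rewrite -[X in measurable X]setTI; exact: mX1 measurableT _ mA.
    - move=> w1 _ /=; case: (pselect (A (X1 w1))) => hw.
        have -> : xsection S w1 = [set w2 | Lhat (obs_data (Zm Q) w2) (X1 w1) = 0].
          apply/seteqP; split => w2; rewrite /xsection /= inE /=; first by case.
          by move=> h; split.
        rewrite indicE (mem_set (hw : (X1 @^-1` A) w1)) mulr1.
        by case: hw => -[].
      have -> : xsection S w1 = set0.
        by apply/seteqP; split => w2 //; rewrite /xsection /= inE /=; case.
      by rewrite measure0 indicE memNset // mulr0.
  have mX1A : measurable (X1 @^-1` A).
    rewrite -[X in measurable X]setTI; exact: mX1 measurableT _ mA.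
  rewrite (@integralZl_indic _ _ _ P setT measurableT (fun _ => X1 @^-1` A) c) //; last first.
    by move=> h; move: c0; rewrite leNgt h.
  by rewrite integral_indic // setIT muAE; exact: lexx.
have le2 : ((1 - alpha)%:E * mu A <= \int[mu]_(x in A) g x)%E.
  rewrite -integral_cst//; apply: ae_ge0_le_integral => //.
  - by move=> x [].
  - exact: measurable_funTS.
  - by apply: filterS aeg => x h _; exact: h.
have le3 : ((1 - alpha)%:E * mu A <= c%:E * mu A)%E.
  by apply: (le_trans le2); rewrite -eqA; exact: le1.
have fA : mu A \is a fin_num.
  by rewrite ge0_fin_numE ?measure_ge0// (le_lt_trans (probability_le1 _ mA)) ?ltry.
have hA : mu A = 0%E.
  move: le3; rewrite -(fineK fA) -!EFinM lee_fin => le3.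
  have r0 : (0 <= fine (mu A))%R by rewrite fine_ge0 ?measure_ge0.
  have : (fine (mu A) <= 0)%R by nra.
  by move=> h; rewrite -(fineK fA); congr EFin; apply: le_anti; rewrite h r0.
have [N [mN muN NP]] := aeg.
have hsub : Q `&` [set x | Hf Q x <= c%:E]%E `<=` A `|` N.
  move=> x hx; case: (pselect (0 <= g x)%E) => hg; first by left.
  right; apply: NP => /= h; apply: hg; apply: le_trans h; by rewrite lee_fin.
apply/eqP; rewrite -measure_le0.
apply: le_trans (le_measure _ _ _ hsub) _; rewrite ?inE //; first exact: measurableU.
apply: le_trans (measureU2 _ mA mN) _.
rewrite [X in (X + _ <= _)%E](_ : _ = 0%E); last exact: hA.
by rewrite [X in (_ + X <= _)%E](_ : _ = 0%E) ?adde0 //; exact: muN.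
Qed.



Definition Gf (x : p.-tuple R) := P [set w | Lhat (obs_data Z w) x = 0].

Lemma tv Q x : measurable Q -> (Hf Q x <= Gf x + (mu Q) *+ n)%E.
Proof.
move=> mQ; have [[mZ idZ indZ] hXC hT] := hm.
have mQ1 : measurable [set z : Unit R p | Q z.1.1].
  rewrite -[X in measurable X]setTI.
  exact: (measurableT_comp (f := fst) (g := fst)) measurableT _ mQ.
pose F (k : nat) := [set w | exists i : 'I_n, (i : nat) = k /\ Q (Z (Some i) w).1.1].
have FE (i : 'I_n) : F i = Z (Some i) @^-1` [set z : Unit R p | Q z.1.1].
  apply/seteqP; split => w /=.
    by move=> [j [/val_inj ji h]]; subst j.
  by move=> h; exists i.
have mF k : `I_n k -> measurable (F k).
  move=> /= hk; rewrite (FE (Ordinal hk)).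
  by rewrite -[X in measurable X]setTI; exact: mZ.
pose U := \big[setU/set0]_(k < n) F k.
have mU : measurable U by apply: bigsetU_measurable => k _; apply: mF; rewrite /= ltn_ord.
have mG : measurable [set w | Lhat (obs_data Z w) x = 0].
  by apply: measurable_Lzero_x => //; apply: measurable_obs_data => i; exact: mZ.
have mHs : measurable [set w | Lhat (obs_data (Zm Q) w) x = 0].
  by apply: measurable_Lzero_x => //; exact: measurable_obs_Zm.
have sub : [set w | Lhat (obs_data (Zm Q) w) x = 0] `<=`
    [set w | Lhat (obs_data Z w) x = 0] `|` U.
  move=> w hw; case: (pselect (exists i : 'I_n, Q (Z (Some i) w).1.1)) => [[i hi]|hno].
    right; rewrite /U -bigcup_mkord. exists (i : nat); first by rewrite /= ltn_ord. by exists i.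
  left; rewrite /= -hw; congr Lhat.
  apply: eq_from_tnth => i; rewrite !tnth_mktuple /Zm /modT indicE in_setC memNset /=.
    by rewrite mul1r; case: (Z (Some i) w) => [[? ?] ?].
  by move=> h; apply: hno; exists i.
have h1 : (Hf Q x <= P ([set w | Lhat (obs_data Z w) x = 0%R] `|` U))%E.
  by apply: le_measure; rewrite ?inE //; exact: measurableU.
apply: le_trans h1 _; apply: le_trans (measureU2 _ mG mU) _.
rewrite leeD2l //.
apply: le_trans (content_subadditive P mF mU _) _; first by [].
rewrite (eq_bigr (fun _ => mu Q)); first by rewrite sumr_const card_ord.
move=> i _.
have eqF : P (F i) = mu Q.
  rewrite FE idZ // /marginal_X /pushforward -(hXC (fst @^-1` Q)) //.
  by rewrite -[X in measurable X]setTI; exact: measurable_fst measurableT _ mQ.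
exact: eqF.
Qed.


Lemma main_result :
  {ae marginal_X PXC, forall x : p.-tuple R,
     marginal_X PXC [set x] = 0%E ->
     ((1 - alpha)%R%:E <= P [set w | Lhat (obs_data Z w) x = 0%R])%E}.
Proof.
have mH Q : measurable Q -> measurable_fun setT (Hf Q).
  by move=> mQ; apply: measurable_Hfun => //; exact: measurable_obs_Zm.
pose cc (k : nat) : R := 1 - alpha - k.+1%:R^-1.
pose Bad (m : nat) : set (p.-tuple R) :=
  match unpickle m with
  | Some kj => cube kj.1 kj.2 `&` [set x | Hf (cube kj.1 kj.2) x <= (cc kj.1)%:E]%E
  | None => set0
  end.
have hall : forall m, \forall x \ae mu, ~ Bad m x.
  move=> m; exists (Bad m); split.
  - rewrite /Bad; case: (unpickle m) => [[k j]|] //=.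
    apply: measurableI; first exact: measurable_cube.
    rewrite -[X in measurable X]setTI.
    by apply: measurable_lee => //; exact: mH (measurable_cube k j).
  - rewrite /Bad; case: (unpickle m) => [[k j]|] //=.
    apply: (key (measurable_cube k j)).
    by rewrite /cc ltrBlDr ltrDl invr_gt0 ltr0n.
  - by move=> x /= /contrapT.
apply: filterS (ae_foralln hall) => x hx hx0.
have [[mZ _ _] _ _] := hm.
have finP d' (T : measurableType d') (Pr : probability T R) (A : set T) :
    measurable A -> Pr A = (fine (Pr A))%:E.
  move=> mA; rewrite fineK // ge0_fin_numE ?measure_ge0 //.
  exact: le_lt_trans (probability_le1 _ mA) (ltry _).
apply/lee_addgt0Pr => e e0.
have h0 : mu (\bigcap_k ballk k x) = 0%E by rewrite bigcap_ballk.
have cvgB : (fun k => mu (ballk k x)) @ \oo --> mu (\bigcap_k ballk k x).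
  apply: nonincreasing_cvg_mu.
  - exact: le_lt_trans (probability_le1 _ (measurable_ballk 0 x)) (ltry _).
  - by move=> k; exact: measurable_ballk.
  - by apply: bigcapT_measurable => k; exact: measurable_ballk.
  - exact: ballk_nonincr.
rewrite h0 in cvgB.
have /fine_cvgP [_ cvgf] := cvgB.
have n10 : (0 < n%:R + 1 :> R) by rewrite ltr_wpDl // ler0n.
pose z := e / 2 / (n%:R + 1).
have z0 : 0 < z by rewrite /z divr_gt0 // divr_gt0.
have e20 : 0 < e / 2 by rewrite divr_gt0.
have [N1 _ hN1] := cvgr_lt _ cvgf _ z0.
have [N2 _ hN2] := near_infty_natSinv_lt (PosNum e20).
pose k := maxn N1 N2.
have hk1 : fine (mu (ballk k x)) < z by exact: (hN1 k (leq_maxl _ _)).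
have hk2 : k.+1%:R^-1 < e / 2 by exact: (hN2 k (leq_maxr _ _)).
pose C : set (p.-tuple R) := cube k (jx k x).
have hnb := hx (pickle (k, jx k x)); rewrite /Bad pickleK /= in hnb.
have hlt : ((cc k)%:E < Hf C x)%E.
  rewrite ltNge; apply/negP => h; apply: hnb; split => //; exact: cube_jx.
have htv := tv x (measurable_cube k (jx k x)).
have hCB : (mu C <= mu (ballk k x))%E.
  by apply: le_measure; rewrite ?inE; [exact: measurable_cube|exact: measurable_ballk|exact: cube_ballk].
have mG : measurable [set w | Lhat (obs_data Z w) x = 0].
  by apply: measurable_Lzero_x => //; apply: measurable_obs_data => i; exact: mZ.
have H1 := lt_le_trans hlt htv.
rewrite /Gf (finP _ _ P _ mG) (finP _ _ mu _ (measurable_cube k (jx k x))) in H1.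
rewrite -EFin_natmul -EFinD lte_fin in H1.
rewrite /C (finP _ _ mu _ (measurable_cube k (jx k x))) (finP _ _ mu _ (measurable_ballk k x)) lee_fin in hCB.
rewrite (finP _ _ P _ mG) -EFinD lee_fin.
move: hk1; rewrite /z ltr_pdivlMr // mulrDr mulr1 => hk1.
have b0 : 0 <= fine (mu (ballk k x)) by rewrite fine_ge0 ?measure_ge0.
have hcb : fine (mu C) * n%:R <= fine (mu (ballk k x)) * n%:R by rewrite ler_wpM2r.
move: H1; rewrite -mulr_natr /cc => H1.
have [ik E] : exists ik : R, k.+1%:R^-1 = ik by eexists.
rewrite E in hk2 H1.
exact: (arith H1 hk2 hk1 hcb b0).
Qed.

End main.

Unset Implicit Arguments.

Theorem theorem5 (R : realType) (p n : nat) (alpha : R)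
  (PXC : probability (p.-tuple R * R)%type R)
  (Lhat : n.-tuple (Unit R p) -> Xsp R p -> R) :
  0 < alpha < 1 ->
  PXC [set z | z.2 < 0] = 0%E ->
  measurable_fun setT (fun u : n.-tuple (Unit R p) * Xsp R p => Lhat u.1 u.2) ->
  (forall D x, 0 <= Lhat D x) ->
  (forall (d : measure_display) (Omega : measurableType d) (P : probability Omega R)
      (Z : option 'I_n -> Omega -> Unit R p),
      survival_model PXC P Z -> cond_coverage PXC Lhat alpha P Z) ->
  forall (d : measure_display) (Omega : measurableType d) (P : probability Omega R)
      (Z : option 'I_n -> Omega -> Unit R p),
    survival_model PXC P Z ->
    {ae marginal_X PXC, forall x : Xsp R p,
       marginal_X PXC [set x] = 0%E ->
       ((1 - alpha)%R%:E <= P [set w | Lhat (obs_data Z w) x = 0%R])%E}.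
Proof.
move=> ha _ mL L0 hcov d Omega P Z hm.
exact: (main_result hm mL L0 ha hcov).
Qed.
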